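(* Let $L$ be a subspace of $\bigwedge^{k}V$ and let $I\subseteq[n]$. There is no infinite sequence of subspaces $L_0=L,L_1,L_2,\dots$ such that for each $s\ge 0$ there are $i_s<j_s$ in $I$ with $L_{s+1}=N_{j_s\to i_s}L_s$ and $L_{s+1}\neq L_s$. Equivalently, the procedure ''while there is a pair $i<j$ in $I$ with $N_{j\to i}L\neq L$, replace $L$ by $N_{j\to i}L$'' terminates for every choice of such non-fixing slow shifts.
   Context: $\mathbb{F}$ is a field (assumed throughout the paper, for expository purposes, to have characteristic not $2$), $V$ is an $n$-dimensional $\mathbb{F}$-vector space with a fixed basis $e_1,\dots,e_n$, and $\bigwedge V=\bigoplus_k\bigwedge^kV$ is its exterior algebra, with $\bigwedge^kV$ having the monomial basis $e_S=e_{s_1}\wedge\cdots\wedge e_{s_k}$, $S=\{s_1<\cdots<s_k\}\subseteq[n]$. For $j\in[n]$, $V^{(j)}$ is the span of $\{e_h:h\neq j\}$, and $\bigwedge V^{(j)}$ is viewed as a subalgebra of $\bigwedge V$. Slow shift: for distinct $i,j\in[n]$ and nonzero $m\in\bigwedge^kV$, write uniquely $m=x+e_j\wedge y$ with $x\in\bigwedge^kV^{(j)}$, $y\in\bigwedge^{k-1}V^{(j)}$, and set $N_{j\to i}m=x+e_i\wedge y$ if this is nonzero, and $N_{j\to i}m=e_j\wedge y$ otherwise (this is, up to scalar, the limit as $t\to 0$ of the action on $\mathbb{P}(\bigwedge^kV)$ of the linear map sending $e_j\mapsto e_i+te_j$ and fixing the other $e_h$, obtained by evaluating at $t=0$ the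 representative with polynomial coefficients having no common factor of positive $t$-degree). For a subspace $L$ of $\bigwedge^kV$, $N_{j\to i}L$ is the span of $\{N_{j\to i}m: m\in L\setminus\{0\}\}$; it has the same dimension as $L$. *)

(* Defs.v *)
From HB Require Import structures.
From mathcomp Require Import all_boot all_order all_algebra.
Set Implicit Arguments. Unset Strict Implicit. Unset Printing Implicit Defensive.
Import GRing.Theory.
Local Open Scope ring_scope.

(* The exterior algebra /\V of V = F^n with basis e_1..e_n, in coordinates:
   an element is a function assigning to every subset A of [n] the
   coefficient of the monomial e_S. *)
Definition extalg (F : fieldType) (n : nat) := {ffun {set 'I_n} -> F^o}.

(* Sign of e_S /\ e_T = sign A B * e_(A u B) for disjoint A, B:
   (-1)^(number of pairs (s,t) in A x B with t < s). *)
Definition wsign (F : fieldType) (n : nat) (A B : {set 'I_n}) : F :=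
  (-1) ^+ #|[set p : 'I_n * 'I_n | [&& p.1 \in A, p.2 \in B & (p.2 < p.1)%N]]|.

Definition wedge (F : fieldType) (n : nat) (a b : extalg F n) : extalg F n :=
  [ffun U : {set 'I_n} => \sum_(A : {set 'I_n}) \sum_(B : {set 'I_n})
     (if (A :&: B == set0) && (A :|: B == U)
      then (wsign F A B * a A * b B : F^o) else 0)].

Definition emon (F : fieldType) (n : nat) (A : {set 'I_n}) : extalg F n :=
  [ffun U : {set 'I_n} => ((U == A)%:R : F^o)].
Definition evec (F : fieldType) (n : nat) (i : 'I_n) : extalg F n :=
  emon F [set i].

Definition wedgek (F : fieldType) (n k : nat) : {vspace extalg F n} :=
  <<[seq emon F A | A <- enum [set A : {set 'I_n} | #|A| == k]]>>%VS.

(* The unique decomposition m = x + e_j /\ y with x, y in /\V^(j)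
   (i.e. supported on monomials not involving e_j). *)
Definition split_x (F : fieldType) (n : nat) (j : 'I_n) (m : extalg F n)
  : extalg F n := [ffun U : {set 'I_n} => if j \in U then 0 else m U].
Definition split_y (F : fieldType) (n : nat) (j : 'I_n) (m : extalg F n)
  : extalg F n :=
  [ffun B : {set 'I_n} => if j \in B then 0 else (wsign F [set j] B * m (j |: B) : F^o)].

Definition slow_shift (F : fieldType) (n : nat) (j i : 'I_n) (m : extalg F n)
  : extalg F n :=
  let v := split_x j m + wedge (evec F i) (split_y j m) in
  if v != 0 then v else wedge (evec F j) (split_y j m).

(* L' = N_{j -> i} L, i.e. L' is the span of { N_{j->i} m : m in L, m <> 0 }
   (characterized as the smallest subspace containing all these vectors). *)
Definition is_slow_shift_space (F : fieldType) (n : nat) (j i : 'I_n)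
  (L L' : {vspace extalg F n}) : Prop :=
  (forall m, m \in L -> m != 0 -> slow_shift j i m \in L') /\
  (forall U : {vspace extalg F n},
     (forall m, m \in L -> m != 0 -> slow_shift j i m \in U) -> (L' <= U)%VS).

(* Main.v *)
Require Import Defs.
From HB Require Import structures.
From mathcomp Require Import all_boot all_order all_algebra.
From Stdlib Require Import ClassicalEpsilon Classical.
From mathcomp Require Import ring zify.
Set Implicit Arguments. Unset Strict Implicit. Unset Printing Implicit Defensive.
Import GRing.Theory.
Local Open Scope ring_scope.

Local Open Scope nat_scope.
Lemma mset_lt (T : finType) (w : T -> nat) (K : nat) (Bx By : {set T}) :
  #|T| < K ->
  (forall x, x \in Bx -> exists2 y, y \in By & (y = x \/ (w x < w y /\ y \notin Bx))) ->
  Bx != By ->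
  \sum_(x in Bx) K ^ w x < \sum_(y in By) K ^ w y.
Proof.
move=> hK H neq.
have K0 : 0 < K by apply: leq_ltn_trans hK.
rewrite [X in _ < X](big_setID Bx) /=.
case: (boolP (Bx \subset By)) => sub.
  rewrite (setIidPr sub) -[X in X < _]addn0 ltn_add2l.
  have [y yD] : exists y, y \in By :\: Bx.
    apply/set0Pn; apply: contra neq; rewrite setD_eq0 => s2.
    by rewrite eqEsubset sub s2.
  by rewrite (bigD1 y) //= (leq_trans _ (leq_addr _ _)) // expn_gt0 K0.
have [x0 x0B] : exists x0, x0 \in Bx :\: By.
  by apply/set0Pn; rewrite setD_eq0.
move: (x0B); rewrite inE => /andP[x0nB x0Bx].
have [y0 y0B [e|[lt0 y0n]]] := H x0 x0Bx.
  by move: x0nB; rewrite -e y0B.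
have y0D : y0 \in By :\: Bx by rewrite inE y0n y0B.
pose M := \max_(y in By :\: Bx) w y.
have hM : forall y, y \in By :\: Bx -> w y <= M.
  by move=> y yD; exact: leq_bigmax_cond.
have M0 : 0 < M by apply: leq_trans (hM y0 y0D); apply: leq_ltn_trans lt0.
have [ys ysD ysM] : exists2 ys, ys \in By :\: Bx & w ys = M.
  have c0 : 0 < #|By :\: Bx| by apply/card_gt0P; exists y0.
  by have [ys ysD e] := eq_bigmax_cond w c0; exists ys.
have lowb : K ^ M <= \sum_(y in By :\: Bx) K ^ w y.
  by rewrite (bigD1 ys) //= ysM leq_addr.
rewrite (big_setID By) /= setIC.
rewrite ltn_add2l (leq_trans _ lowb) //.
have step : \sum_(x in Bx :\: By) K ^ w x <= #|Bx :\: By| * K ^ M.-1.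
  rewrite -sum_nat_const; apply: leq_sum => x xD.
  move: (xD); rewrite inE => /andP[xnB xBx].
  have [y yB [e|[lt yn]]] := H x xBx.
    by move: xnB; rewrite -e yB.
  rewrite leq_pexp2l // -ltnS prednK //.
  by apply: leq_trans lt (hM y _); rewrite inE yn yB.
apply: (leq_ltn_trans step).
rewrite -{2}(prednK M0) expnS ltn_pmul2r ?expn_gt0 ?K0 //.
by apply: leq_ltn_trans hK; apply: max_card.
Qed.

Local Open Scope ring_scope.
Section Basics.
Variables (F : fieldType) (n : nat).
Local Notation X := {set 'I_n}.
Local Notation V := (extalg F n).

Lemma extE (m1 m2 : V) : (forall U, m1 U = m2 U) -> m1 = m2.
Proof. by move=> h; apply/ffunP. Qed.

Lemma addE (m1 m2 : V) U : (m1 + m2) U = m1 U + m2 U.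
Proof. by rewrite ffunE. Qed.
Lemma scaleE k (m : V) U : (k *: m) U = k * m U.
Proof. by rewrite ffunE. Qed.
Lemma zeroE U : (0 : V) U = 0.
Proof. by rewrite ffunE. Qed.
Lemma oppE (m : V) U : (- m) U = - m U.
Proof. by rewrite ffunE. Qed.
Lemma subE (m1 m2 : V) U : (m1 - m2) U = m1 U - m2 U.
Proof. by rewrite ffunE oppE. Qed.
Lemma sumE I (r : seq I) (P : pred I) (f : I -> V) U :
  (\sum_(x <- r | P x) f x) U = \sum_(x <- r | P x) f x U.
Proof. by elim/big_rec2: _ => [|x a b _ <-]; rewrite ?zeroE ?addE. Qed.

Lemma wsign_sq (A B : X) : wsign F A B * wsign F A B = 1.
Proof. by rewrite /wsign -exprD addnn -mul2n exprM sqrrN expr1n expr1n. Qed.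

Lemma wedge_evecE i (b : V) U :
  wedge (evec F i) b U =
  if i \in U then (wsign F [set i] (U :\ i) * b (U :\ i) : F) else 0.
Proof.
rewrite /wedge ffunE (eq_bigr (fun A => if A == [set i] then
   \sum_B (if ([set i] :&: B == set0) && ([set i] :|: B == U)
            then (wsign F [set i] B * b B : F) else 0) else 0)); last first.
  move=> A _; case: eqP => [->|/eqP hA].
    apply: eq_bigr => B _; case: ifP => // _.
    by rewrite /evec /emon ffunE eqxx mulr1.
  apply: big1 => B _; case: ifP => // _.
  by rewrite /evec /emon ffunE (negbTE hA) mulr0 mul0r.
rewrite -big_mkcond big_pred1_eq.
case: ifP => iU.
  rewrite (bigD1 (U :\ i)) //= big1 ?addr0.
    have -> : [set i] :&: (U :\ i) == set0.
      by apply/eqP/setP=> x; rewrite !inE; case: eqP => // ->; rewrite eqxx.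
    by rewrite /= setD1K ?eqxx.
  move=> B hB; case: ifP => //= /andP[/eqP h1 /eqP h2]; case/eqP: hB.
  have hiB : (i \in B) = false by move/setP: h1 => /(_ i); rewrite !inE eqxx.
  apply/setP=> x; rewrite -h2 !inE; case: (eqVneq x i) => [->|] //=.
apply: big1 => B _; case: ifP => // /andP[_ /eqP h2].
by move: iU; rewrite -h2 !inE eqxx.
Qed.


Definition cc (i j : 'I_n) (T : X) : F :=
  wsign F [set i] (T :\ i) * wsign F [set j] (T :\ i).
Definition cf (i j : 'I_n) (T : X) : F :=
  if (j \notin T) && (i \in T) then cc i j T else 0.
Definition tau (i j : 'I_n) (T : X) : X :=
  if (j \notin T) && (i \in T) then j |: (T :\ i) else T.
Definition Pf (i j : 'I_n) (m : V) : V :=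
  [ffun U : X => if j \in U then 0 else m U + cf i j U * m (tau i j U)].
Definition pr (a : {set X}) (m : V) : V := [ffun U : X => if U \in a then m U else 0].
Definition Jset (j : 'I_n) : {set X} := [set U : X | j \in U].

Lemma Pf_lin i j : linear (Pf i j).
Proof.
move=> a u v; apply/ffunP=> U; rewrite !ffunE.
case: ifP => _; first by rewrite scaler0 addr0.
by rewrite scalerDr mulrDr scalerAr addrACA.
Qed.

Lemma pr_lin a : linear (pr a).
Proof.
move=> k u v; apply/ffunP=> U; rewrite !ffunE.
by case: ifP => _; rewrite ?scaler0 ?addr0.
Qed.

Definition PL i j : {linear V -> V} :=
  HB.pack (Pf i j) (GRing.isLinear.Build _ _ _ _ (Pf i j) (Pf_lin i j)).
Definition prL a : {linear V -> V} :=
  HB.pack (pr a) (GRing.isLinear.Build _ _ _ _ (pr a) (pr_lin a)).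
Definition Ph i j : 'Hom(V, V) := linfun (PL i j).
Definition prh a : 'Hom(V, V) := linfun (prL a).
Lemma PhE i j m : Ph i j m = Pf i j m.
Proof. by rewrite /Ph lfunE. Qed.
Lemma prhE a m : prh a m = pr a m.
Proof. by rewrite /prh lfunE. Qed.

Lemma shiftE (i j : 'I_n) (m : V) : i != j ->
  slow_shift j i m = if Pf i j m != 0 then Pf i j m else pr (Jset j) m.
Proof.
move=> ij.
have e1 : split_x j m + wedge (evec F i) (split_y j m) = Pf i j m.
  apply/ffunP=> U; rewrite addE wedge_evecE /Pf /split_x /cf /tau !ffunE.
  case: (boolP (j \in U)) => jU /=.
    rewrite add0r; case: ifP => // iU.
    by rewrite !inE jU eq_sym ij /= mulr0.
  case: ifP => iU; last by rewrite mul0r.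
  by rewrite !inE (negbTE jU) andbF /= mulrA.
have e2 : wedge (evec F j) (split_y j m) = pr (Jset j) m.
  apply/ffunP=> U; rewrite wedge_evecE /pr /split_y !ffunE !inE.
  by case: ifP => // jU; rewrite eqxx /= mulrA wsign_sq mul1r setD1K.
by unfold slow_shift; cbv zeta; rewrite e1 e2.
Qed.


Definition vanish (a : {set X}) (m : V) : Prop := forall U, U \in a -> m U = 0.
Definition inj (L : {vspace V}) (a : {set X}) : Prop :=
  forall m, m \in L -> vanish a m -> m = 0.

Lemma vanish_ker (a : {set X}) (m : V) : vanish a m <-> m \in lker (prh a).
Proof.
rewrite memv_ker prhE; split=> [h|/eqP h U Ua].
  by apply/eqP/ffunP=> U; rewrite !ffunE; case: ifP => // /h.
by move/ffunP: h => /(_ U); rewrite !ffunE Ua.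
Qed.

Lemma decomp (x : V) : x = \sum_U x U *: emon F U.
Proof.
apply/ffunP=> W; rewrite sumE (bigD1 W) //= big1 ?addr0.
  by rewrite scaleE /emon ffunE eqxx mulr1.
by move=> U hU; rewrite scaleE /emon ffunE eq_sym (negbTE hU) mulr0.
Qed.

Definition Espan (a : {set X}) : {vspace V} := <<[seq emon F U | U <- enum a]>>%VS.

Lemma memE (a : {set X}) (x : V) : (forall U, U \notin a -> x U = 0) -> x \in Espan a.
Proof.
move=> h; rewrite (decomp x) (bigID (mem a)) /= [X in _ + X]big1 ?addr0; last first.
  by move=> U hU; rewrite h // scale0r.
apply: memv_suml => U Ua; apply: memvZ; apply: memv_span.
by apply: map_f; rewrite mem_enum.
Qed.

Lemma dim_Espan (a : {set X}) : (\dim (Espan a) <= #|a|)%N.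
Proof. by rewrite (leq_trans (dim_span _)) // size_map -cardE. Qed.

Lemma dim_inj (L : {vspace V}) (a : {set X}) : inj L a -> (\dim L <= #|a|)%N.
Proof.
move=> h.
have h0 : (L :&: lker (prh a) = 0)%VS.
  apply/eqP; rewrite -subv0; apply/subvP => m /memv_capP [mL mk].
  by rewrite memv0; apply/eqP; apply: h => //; apply/vanish_ker.
rewrite -(limg_dim_eq h0) (leq_trans _ (dim_Espan a)) //; apply: dimvS.
apply/subvP=> y /memv_imgP [m _ ->]; apply: memE => U hU.
by rewrite prhE ffunE (negbTE hU).
Qed.

Lemma inj_sub (L : {vspace V}) (a b : {set X}) : a \subset b -> inj L a -> inj L b.
Proof. by move=> ab h m mL hv; apply: h => // U Ua; apply: hv; apply: (subsetP ab). Qed.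

Lemma inj_subspace (S L : {vspace V}) (a : {set X}) : (S <= L)%VS -> inj L a -> inj S a.
Proof. by move=> SL h m mS; apply: h; apply: (subvP SL). Qed.

Lemma nonzero_coord (m : V) : m != 0 -> exists U, m U != 0.
Proof.
move=> hm; have : ~~ [forall U, m U == 0].
  apply: contra hm => /forallP h; apply/eqP/ffunP => U; rewrite ffunE; exact/eqP/h.
by rewrite negb_forall => /existsP.
Qed.

Lemma exists_basis0 d (L : {vspace V}) : (\dim L <= d)%N -> exists a, inj L a /\ (#|a| <= \dim L)%N.
Proof.
elim: d L => [|d IH] L.
  rewrite leqn0 dimv_eq0 => /eqP ->; exists set0; split; last by rewrite cards0.
  by move=> m; rewrite memv0 => /eqP.
move=> hd.
case: (eqVneq L 0%VS) => [->|hL].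
  by exists set0; split; [move=> m; rewrite memv0 => /eqP| rewrite cards0].
have hm : vpick L != 0 by rewrite vpick0.
have [U0 hU0] := nonzero_coord hm.
pose L0 := (L :&: lker (prh [set U0]))%VS.
have [le eqv] := dimv_leqif_eq (capvSl L (lker (prh [set U0]))).
have lt : (\dim L0 < \dim L)%N.
  rewrite ltn_neqAle le andbT eqv; apply/negP => /eqP e.
  have : vpick L \in L0 by rewrite /L0 e memv_pick.
  rewrite memv_cap => /andP[_ /vanish_ker h].
  by move: (h U0 (set11 U0)); move/eqP: hU0.
have [a0 [ia0 ca0]] := IH L0 (leq_trans (leq_trans lt hd) (leqnn _)).
exists (U0 |: a0); split.
  move=> m mL hv; apply: ia0.
    rewrite memv_cap mL; apply/vanish_ker => U; rewrite inE => /eqP ->.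
    by apply: hv; rewrite setU11.
  by move=> U Ua; apply: hv; rewrite setU1r.
by rewrite cardsU1 (leq_trans (leq_add (leq_b1 _) ca0)) // add1n.
Qed.

Lemma exists_basis (L : {vspace V}) : exists a, inj L a /\ #|a| = \dim L.
Proof.
have [a [ia ca]] := exists_basis0 (leqnn (\dim L)).
by exists a; split => //; apply/eqP; rewrite eqn_leq ca dim_inj.
Qed.


Lemma twoway (L : {vspace V}) (R : V -> Prop) (Ug Uh : X) (c0 : F) :
  (forall u v k1 k2, R u -> R v -> R (k1 *: u - k2 *: v)) ->
  (forall m, m \in L -> R m -> m Ug + c0 * m Uh = 0 -> m = 0) ->
  (forall m, m \in L -> R m -> m Ug = 0 -> m = 0) \/
  (forall m, m \in L -> R m -> m Uh = 0 -> m = 0).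
Proof.
move=> Rcl H; case: (classic (forall m, m \in L -> R m -> m Ug = 0 -> m = 0)) => [|nP1].
  by left.
right=> v vL Rv hv; apply: NNPP => vnz; apply: nP1 => u uL Ru hu.
apply: NNPP => unz.
pose f (m : V) : F := m Ug + c0 * m Uh.
have fu : f u != 0 by apply/eqP => e; apply: unz; apply: H.
have fv : f v != 0 by apply/eqP => e; apply: vnz; apply: H.
pose w := f v *: u - f u *: v.
have wL : w \in L by rewrite memvB // memvZ.
have Rw : R w by apply: Rcl.
have w0 : w = 0.
  apply: H => //; rewrite /w !subE !scaleE.
  rewrite /f; ring.
have : w Ug = 0 by rewrite w0 zeroE.
rewrite /w subE !scaleE hu mulr0 sub0r => /eqP; rewrite oppr_eq0 mulf_eq0 (negbTE fu) /=.
by move=> e; move: fv; rewrite /f hv mulr0 addr0 (eqP e) eqxx.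
Qed.


Lemma expand0 k (L : {vspace V}) (beta : {set X}) (b : X -> X) :
  forall (a : X -> X) (c : X -> F),
  (#|[set T in beta | c T != 0%R]| <= k)%N ->
  (forall m, m \in L -> (forall T, T \in beta -> m (a T) + c T * m (b T) = 0) -> m = 0) ->
  exists d : X -> X, (forall T, d T = a T \/ d T = b T) /\
    (forall m, m \in L -> (forall T, T \in beta -> m (d T) = 0) -> m = 0).
Proof.
elim: k => [|k IH] a c hk H.
  exists a; split=> [T|m mL hm]; first by left.
  apply: H => // T Tb; rewrite hm //.
  suff -> : c T = 0 by rewrite mul0r addr0.
  move: hk; rewrite leqn0 cards_eq0 => /eqP /setP /(_ T); rewrite !inE Tb /=.
  by move/negbT; rewrite negbK => /eqP.
case: (set_0Vmem [set T in beta | c T != 0%R]) => [e|[T0]].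
  exists a; split=> [T|m mL hm]; first by left.
  apply: H => // T Tb; rewrite hm //.
  suff -> : c T = 0 by rewrite mul0r addr0.
  move/setP: e => /(_ T); rewrite !inE Tb /=.
  by move/negbT; rewrite negbK => /eqP.
rewrite inE => /andP[T0b cT0].
pose c' := fun T => if T == T0 then 0 else c T.
have hk' : (#|[set T in beta | c' T != 0%R]| <= k)%N.
  have : [set T in beta | c' T != 0%R] \proper [set T in beta | c T != 0%R].
    apply/properP; split.
      apply/subsetP => T; rewrite !inE /c'; case: (T == T0) => //.
      by rewrite eqxx andbF.
    by exists T0; rewrite !inE /c' ?T0b ?cT0 // eqxx eqxx andbF.
  by move/proper_card => h; rewrite -ltnS (leq_trans h hk).
pose R := fun m : V => forall T, T \in beta -> T != T0 -> m (a T) + c T * m (b T) = 0.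
have Rcl : forall u v k1 k2, R u -> R v -> R (k1 *: u - k2 *: v).
  move=> u v k1 k2 Ru Rv T Tb TT0; rewrite !subE !scaleE.
  have := Ru T Tb TT0; have := Rv T Tb TT0 => e1 e2.
  have -> : k1 * u (a T) - k2 * v (a T) + c T * (k1 * u (b T) - k2 * v (b T)) =
     k1 * (u (a T) + c T * u (b T)) - k2 * (v (a T) + c T * v (b T)) by ring.
  by rewrite e1 e2 !mulr0 subr0.
have H2 : forall m, m \in L -> R m -> m (a T0) + c T0 * m (b T0) = 0 -> m = 0.
  move=> m mL Rm h; apply: H => // T Tb; case: (eqVneq T T0) => [->|]//.
  exact: Rm.
case: (twoway Rcl H2) => H3.
  have [d [hd1 hd2]] := IH a c' hk' (fun m mL hm => H3 m mL
     (fun T Tb TT0 => ltac:(have := hm T Tb; rewrite /c' (negbTE TT0); exact))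
     (ltac:(have := hm T0 T0b; rewrite /c' eqxx mul0r addr0; exact))).
  by exists d.
pose a' := fun T => if T == T0 then b T0 else a T.
have [d [hd1 hd2]] := IH a' c' hk' (fun m mL hm => H3 m mL
     (fun T Tb TT0 => ltac:(have := hm T Tb; rewrite /c' /a' (negbTE TT0); exact))
     (ltac:(have := hm T0 T0b; rewrite /c' /a' eqxx mul0r addr0; exact))).
exists d; split=> // T; case: (hd1 T) => ->; last by right.
by rewrite /a'; case: eqP => [->|]; [right|left].
Qed.


Definition injb (L : {vspace V}) (a : {set X}) : bool :=
  if excluded_middle_informative (inj L a) then true else false.
Lemma injbP (L : {vspace V}) (a : {set X}) : reflect (inj L a) (injb L a).
Proof. by rewrite /injb; case: excluded_middle_informative => h; constructor. Qed.
Definition Bs (L : {vspace V}) : {set {set X}} := [set a : {set X} | (#|a| == \dim L) && injb L a].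
Lemma inBs (L : {vspace V}) (a : {set X}) : a \in Bs L <-> #|a| = \dim L /\ inj L a.
Proof.
rewrite inE; split=> [/andP[/eqP -> /injbP h]|[-> h]] //.
by rewrite eqxx; apply/injbP.
Qed.

Definition omega (T : X) : nat := \sum_(s in T) (s : nat).
Definition Wset (a : {set X}) : nat := \sum_(T in a) omega T.
Definition pot (L : {vspace V}) : nat := \sum_(a in Bs L) (#|{set X}|.+1) ^ Wset a.

Section Step.
Variables (i j : 'I_n) (hij : (i < j)%N) (L L' : {vspace V}).
Variable HS : is_slow_shift_space j i L L'.

Let J := Jset j.
Let W0 := lker (prh J).
Let W1 := lker (prh (~: J)).

Lemma ij : i != j.
Proof. by rewrite neq_ltn hij. Qed.

Lemma inJ U : (U \in J) = (j \in U).
Proof. by rewrite inE. Qed.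

Lemma W0P m : (m \in W0) <-> vanish J m.
Proof. by rewrite -vanish_ker. Qed.
Lemma W1P m : (m \in W1) <-> vanish (~: J) m.
Proof. by rewrite -vanish_ker. Qed.

Lemma Pf_W0 m : Pf i j m \in W0.
Proof. by apply/W0P => U; rewrite !inE ffunE => ->. Qed.
Lemma prJ_W1 m : pr J m \in W1.
Proof. by apply/W1P => U; rewrite !inE ffunE !inE => /negbTE ->. Qed.

Lemma Pf_id m : vanish J m -> Pf i j m = m.
Proof.
move=> h; apply/ffunP => U; rewrite ffunE.
case: ifP => jU; first by rewrite h // !inE.
rewrite /cf /tau; case: ifP => _; last by rewrite mul0r addr0.
by rewrite (h (j |: U :\ i)) ?mulr0 ?addr0 // !inE eqxx.
Qed.

Lemma pr_id (a : {set X}) m : vanish (~: a) m -> pr a m = m.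
Proof.
by move=> h; apply/ffunP => U; rewrite ffunE; case: ifP => // hU; rewrite h // inE hU.
Qed.
Lemma pr_sum (a : {set X}) (I : finType) (P : pred I) (c : I -> F) (g : I -> V) :
  pr a (\sum_(x | P x) c x *: g x) = \sum_(x | P x) c x *: pr a (g x).
Proof.
apply/ffunP => U; rewrite ffunE !sumE; case: ifP => hU.
  by apply: eq_bigr => x _; rewrite !scaleE ffunE hU.
by rewrite big1 // => x _; rewrite scaleE ffunE hU mulr0.
Qed.
Lemma pr_0 (a : {set X}) m : vanish a m -> pr a m = 0.
Proof. by move=> h; apply/ffunP => U; rewrite !ffunE; case: ifP => // /h. Qed.

Lemma shift_mem m : m \in L -> m != 0 ->
  (Pf i j m != 0 -> Pf i j m \in L') /\ (Pf i j m = 0 -> pr J m \in L').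
Proof.
move=> mL m0; have := HS.1 m mL m0; rewrite shiftE ?ij //.
by split=> [h|h]; move: H; rewrite ?h ?eqxx //= h.
Qed.

Lemma L'_split : (L' <= L' :&: W0 + L' :&: W1)%VS.
Proof.
apply: HS.2 => m mL m0; rewrite shiftE ?ij //.
have [sP sQ] := shift_mem mL m0.
case: ifP => hP.
  rewrite -[Pf i j m]addr0; apply: memv_add; last exact: mem0v.
  by rewrite memv_cap sP // Pf_W0.
rewrite -[pr J m]add0r; apply: memv_add; first exact: mem0v.
by rewrite memv_cap prJ_W1 sQ //; apply/eqP; rewrite -[_ == _]negbK hP.
Qed.

Let K := (L :&: lker (Ph i j))%VS.
Let Sup := (Ph i j @: L + prh J @: K)%VS.

Lemma L'_sup : (L' <= Sup)%VS.
Proof.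
apply: HS.2 => m mL m0; rewrite shiftE ?ij //.
case: ifP => hP.
  rewrite -[Pf i j m]addr0 -PhE; apply: memv_add; last exact: mem0v.
  exact: memv_img.
rewrite -[pr J m]add0r -prhE; apply: memv_add; first exact: mem0v.
apply: memv_img; rewrite memv_cap mL memv_ker PhE.
by rewrite -[_ == _]negbK hP.
Qed.

Lemma dim_le : (\dim L' <= \dim L)%N.
Proof.
apply: (leq_trans (dimvS L'_sup)); apply: (leq_trans (dimv_add_leqif _ _)).
rewrite -(limg_ker_dim (Ph i j) L) addnC leq_add2r.
by rewrite -(limg_ker_dim (prh J) K) leq_addl.
Qed.


Lemma count_basis (S : {vspace V}) (g : {set X}) :
  (S <= S :&: W0 + S :&: W1)%VS -> inj S g -> #|g| = \dim S ->
  \dim (S :&: W1) = #|g :&: J| /\ \dim (S :&: W0) = #|g :\: J|.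
Proof.
move=> sp ig cg.
have i1 : inj (S :&: W1) (g :&: J).
  move=> m /memv_capP [mS /W1P m1] hv; apply: ig => // U Ug.
  case: (boolP (U \in J)) => UJ; first by apply: hv; rewrite inE Ug UJ.
  by apply: m1; rewrite inE UJ.
have i0 : inj (S :&: W0) (g :\: J).
  move=> m /memv_capP [mS /W0P m0] hv; apply: ig => // U Ug.
  case: (boolP (U \in J)) => UJ; first by apply: m0.
  by apply: hv; rewrite inE Ug UJ.
have d1 := dim_inj i1; have d0 := dim_inj i0.
have ds : (\dim S <= \dim (S :&: W0) + \dim (S :&: W1))%N.
  exact: leq_trans (dimvS sp) (dimv_add_leqif _ _).
have := cardsID J g; rewrite cg => e.
split; lia.
Qed.

Lemma omega_tau (T : X) : (j \notin T) && (i \in T) -> (omega T < omega (tau i j T))%N.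
Proof.
move=> c; rewrite /tau c; case/andP: c => jT iT.
rewrite /omega (big_setD1 i iT) big_setU1 /=; last by rewrite !inE negb_and jT orbT.
by rewrite ltn_add2r.
Qed.

Lemma omega_le (T : X) : (omega T <= omega (tau i j T))%N.
Proof.
case: (boolP ((j \notin T) && (i \in T))) => c; first exact/ltnW/omega_tau.
by rewrite /tau (negbTE c).
Qed.

Lemma F1 (beta : {set X}) : beta \in Bs L' ->
  exists2 alpha, alpha \in Bs L &
    (alpha = beta \/ ((Wset beta < Wset alpha)%N /\ alpha \notin Bs L')).
Proof.
move=> /inBs [cb ib].
have step1 : forall m, m \in L ->
    (forall T, T \in beta -> m ((fun T => T) T) + cf i j T * m (tau i j T) = 0) -> m = 0.
  move=> m mL hm; case: (eqVneq m 0) => // m0; exfalso.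
  have [sP sQ] := shift_mem mL m0.
  case: (eqVneq (Pf i j m) 0) => hP; last first.
    apply: (negP hP); apply/eqP; apply: ib; first exact: sP.
    move=> T Tb; rewrite ffunE; case: ifP => // jT; exact: hm T Tb.
  have q0 : pr J m = 0.
    apply: ib; first exact: sQ.
    move=> T Tb; rewrite ffunE; case: ifP => // TJ; have := hm T Tb.
    by rewrite /cf; move: TJ; rewrite inE => ->; rewrite /= mul0r addr0.
  move/eqP: m0; apply; apply/ffunP => U; rewrite zeroE.
  case: (boolP (j \in U)) => jU.
    by have := congr1 (fun x : V => x U) q0; rewrite ffunE zeroE inE jU.
  have := congr1 (fun x : V => x U) hP; rewrite ffunE zeroE (negbTE jU).
  rewrite /cf /tau; case: ifP => [/andP[_ iU] | _]; last by rewrite mul0r addr0.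
  have := congr1 (fun x : V => x (j |: U :\ i)) q0; rewrite ffunE zeroE !inE eqxx /= => ->.
  by rewrite mulr0 addr0.
have [d [hd ind]] := @expand0 _ L beta (tau i j) (fun T => T) (cf i j) (leqnn _) step1.
pose alpha := d @: beta.
have ia : inj L alpha.
  by move=> m mL hv; apply: ind => // T Tb; apply: hv; exact: imset_f.
have c1 := dim_inj ia.
have c2 : (#|alpha| <= #|beta|)%N := leq_imset_card d beta.
have c3 := dim_le.
have e : \dim L' = \dim L by apply/eqP; rewrite eqn_leq c3 /= -cb (leq_trans c1 c2).
have ca : #|alpha| = \dim L.
  by apply/eqP; rewrite eqn_leq c1 andbT (leq_trans c2) // cb e.
have cab : #|alpha| = #|beta| by rewrite ca cb e.
have dinj : {in beta &, injective d} by apply/imset_injP; rewrite cab.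
exists alpha; first by apply/inBs.
case: (boolP [forall T in beta, d T == T]) => hall.
  left; rewrite /alpha -[X in _ = X]imset_id; apply: eq_in_imset => T Tb.
  by apply/eqP; move/forall_inP: hall; apply.
right.
have [T0 T0b dT0] : exists2 T0, T0 \in beta & d T0 != T0.
  by move: hall; rewrite negb_forall_in => /exists_inP [T0 ? ?]; exists T0.
have [cond eT0] : (j \notin T0) && (i \in T0) /\ d T0 = tau i j T0.
  case: (hd T0) => e0; first by rewrite e0 eqxx in dT0.
  split=> //; move: dT0; rewrite e0 /tau; case: ifP => //; by rewrite eqxx.
have dle : forall T, (omega T <= omega (d T))%N.
  by move=> T; case: (hd T) => ->; [exact: leqnn | exact: omega_le].
split.
  rewrite /Wset big_imset //= (bigD1 T0) //= [X in (_ < X)%N](bigD1 T0) //=.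
  rewrite -addSn; apply: leq_add; first by rewrite eT0; exact: omega_tau.
  by apply: leq_sum => T _; exact: dle.
apply/negP => /inBs [ca' ia'].
have [e1 _] := count_basis L'_split ia' ca'.
have [e2 _] := count_basis L'_split ib cb.
have dJ : forall T, T \in J -> d T = T.
  move=> T; rewrite inE => jT; case: (hd T) => -> //.
  by rewrite /tau jT.
have : (#|beta :&: J| < #|alpha :&: J|)%N.
  have -> : alpha :&: J = d @: [set T in beta | d T \in J].
    apply/setP => y; rewrite inE; apply/andP/imsetP.
      case=> /imsetP [T Tb ->] hJ; exists T => //; by rewrite inE Tb hJ.
    case=> T; rewrite inE => /andP [Tb hJ] ->; split => //; exact: imset_f.
  rewrite card_in_imset; last first.
    by move=> x y; rewrite !inE => /andP[xb _] /andP[yb _]; apply: dinj.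
  apply: proper_card; apply/properP; split.
    by apply/subsetP => T; rewrite !inE => /andP[Tb TJ]; rewrite Tb /= dJ ?inE.
  exists T0; first by rewrite inE T0b eT0 /tau cond !inE eqxx.
  by rewrite !inE T0b /=; case/andP: cond.
by rewrite -e1 -e2 ltnn.
Qed.


Lemma prC m : pr J m + pr (~: J) m = m.
Proof.
apply/ffunP => U; rewrite !ffunE !inE.
by case: (j \in U) => /=; rewrite ?addr0 ?add0r.
Qed.

Lemma F2 : Bs L' = Bs L -> L' = L.
Proof.
move=> eB.
have [beta [ib cb]] := exists_basis L.
have bL : beta \in Bs L by apply/inBs.
have bL' : beta \in Bs L' by rewrite eB.
move/inBs: (bL') => [cb' ib'].
have [e1 _] := count_basis L'_split ib' cb'.
have allJ : forall g, g \in Bs L -> #|g :&: J| = #|beta :&: J|.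
  move=> g; rewrite -eB => /inBs [cg ig].
  by have [e _] := count_basis L'_split ig cg; rewrite -e e1.
have fund : forall T, exists f : V,
    T \in beta -> [/\ f \in L, f T != 0 & vanish (beta :\ T) f].
  move=> T; case: (boolP (T \in beta)) => Tb; last by exists 0.
  have ninj : ~ inj L (beta :\ T).
    move=> h; have := dim_inj h; rewrite -cb (cardsD1 T beta) Tb.
    by rewrite add1n ltnn.
  have [f [fL [fv fnz]]] : exists f, f \in L /\ vanish (beta :\ T) f /\ f != 0.
    apply: NNPP => hne; apply: ninj => m mL hv; apply: NNPP => mnz.
    by apply: hne; exists m; split; [|split; [|apply/eqP]].
  exists f => _; split => //.
  apply: contra fnz => /eqP fT0; apply/eqP; apply: ib => // U Ub.
  case: (eqVneq U T) => [->//|UT]; apply: fv; exact/setD1P.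
pose f T := proj1_sig (constructive_indefinite_description _ (fund T)).
have hf : forall T, T \in beta -> [/\ f T \in L, f T T != 0 & vanish (beta :\ T) (f T)].
  by move=> T; exact: (proj2_sig (constructive_indefinite_description _ (fund T))).
have exch : forall T U, T \in beta -> U \notin beta -> f T U != 0 ->
    (U |: (beta :\ T)) \in Bs L.
  move=> T U Tb Ub fU; have [fL fT fv] := hf T Tb; apply/inBs; split.
    rewrite cardsU1 !inE negb_and Ub orbT /= -cb (cardsD1 T beta) Tb.
    by [].
  move=> m mL hv.
  pose mu := m T / f T T.
  have e : m - mu *: f T = 0.
    apply: ib; first by rewrite memvB // memvZ.
    move=> U' U'b; rewrite subE scaleE.
    case: (eqVneq U' T) => [->|U'T].
      by rewrite /mu divfK // subrr.
    rewrite hv; last by rewrite !inE U'T U'b orbT.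
    by rewrite fv ?mulr0 ?subr0 // !inE U'T U'b.
  have mU : m U = 0 by apply: hv; rewrite setU11.
  have mu0 : mu = 0.
    have := congr1 (fun x : V => x U) e; rewrite subE scaleE zeroE mU sub0r.
    by move/eqP; rewrite oppr_eq0 mulf_eq0 (negbTE fU) orbF => /eqP.
  by move/eqP: e; rewrite mu0 scale0r subr0 => /eqP.
have hom : forall T, T \in beta ->
    (T \in J -> vanish (~: J) (f T)) /\ (T \notin J -> vanish J (f T)).
  move=> T Tb; have [fL fT fv] := hf T Tb.
  have cbJ : #|beta :&: J| = ((T \in J) + #|(beta :\ T) :&: J|)%N.
    rewrite (cardsD1 T (beta :&: J)) inE Tb /=; congr (_ + #|_|).
    by rewrite setIDAC.
  split => TJ U hU; apply: NNPP => /eqP fU.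
    have UJ : U \notin J by move: hU; rewrite inE.
    have Ub : U \notin beta.
      apply: contra fU => Ub; apply/eqP; apply: fv; rewrite !inE Ub andbT.
      by apply: contraNneq UJ => ->.
    have := allJ _ (exch T U Tb Ub fU).
    have -> : (U |: (beta :\ T)) :&: J = (beta :\ T) :&: J.
      have UJ' : (j \in U) = false by move: UJ; rewrite inE => /negbTE.
      by apply/setP => x; rewrite !inE; case: (eqVneq x U) => [->|] //=; rewrite UJ' !andbF.
    by rewrite cbJ TJ add1n => e; lia.
  have Ub : U \notin beta.
    apply: contra fU => Ub; apply/eqP; apply: fv; rewrite !inE Ub andbT.
    by apply: contraNneq TJ => <-.
  have := allJ _ (exch T U Tb Ub fU).
  have -> : (U |: (beta :\ T)) :&: J = U |: ((beta :\ T) :&: J).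
    have UJ' : (j \in U) by move: hU; rewrite inE.
    by apply/setP => x; rewrite !inE; case: (eqVneq x U) => [->|] //=; rewrite UJ'.
  rewrite cardsU1 cbJ (negbTE TJ) !inE (negbTE Ub) andbF /= add0n add1n => e; lia.
have dec : forall m, m \in L -> m = \sum_(T in beta) (m T / f T T) *: f T.
  move=> m mL; apply/eqP; rewrite -subr_eq0; apply/eqP; apply: ib.
    rewrite memvB // memv_suml // => T Tb; rewrite memvZ //.
    by have [] := hf T Tb.
  move=> U Ub; rewrite subE sumE (bigD1 U) //= big1 ?addr0.
    by rewrite scaleE divfK ?subrr //; have [] := hf U Ub.
  move=> T /andP [Tb TU]; rewrite scaleE; have [_ _ fv] := hf T Tb.
  by rewrite (fv U) ?mulr0 //; apply/setD1P; split => //; rewrite eq_sym.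
have Lsplit : forall m, m \in L -> pr (~: J) m \in L.
  move=> m mL; rewrite (dec m mL) pr_sum.
  apply: memv_suml => T Tb; apply: memvZ.
  have [fL _ _] := hf T Tb; have [h1 h0] := hom T Tb.
  case: (boolP (T \in J)) => TJ; first by rewrite pr_0 ?mem0v //; exact: h1.
  by rewrite pr_id // setCK; exact: h0.
have LJ : forall m, m \in L -> pr J m \in L.
  move=> m mL; have -> : pr J m = m - pr (~: J) m by rewrite -{2}(prC m) addrK.
  by rewrite memvB // Lsplit.
have Lsp : (L <= L :&: W0 + L :&: W1)%VS.
  apply/subvP => m mL; rewrite -(prC m) addrC; apply: memv_add.
    rewrite memv_cap Lsplit //; apply/W0P => U UJ; by rewrite ffunE inE UJ.
  by rewrite memv_cap LJ // prJ_W1.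
have [eL1 _] := count_basis Lsp ib cb.
have sub1 : (L' :&: W1 <= L :&: W1)%VS.
  apply/subvP => x /memv_capP [xL' xW1]; rewrite memv_cap xW1 andbT.
  have := subvP L'_sup x xL'; case/memv_addP => a aP [c cQ ex].
  case/memv_imgP: aP => u uL ea; case/memv_imgP: cQ => v /memv_capP [vL _] ec.
  have -> : x = pr J v.
    rewrite -(pr_id (a := J) (m := x)); last by apply/W1P.
    apply/ffunP => U; rewrite ex ea ec PhE prhE !ffunE.
    by case: ifP => // UJ; move: UJ; rewrite inE => ->; rewrite add0r.
  exact: LJ.
have eq1 : (L :&: W1 <= L')%VS.
  have [_ ] := dimv_leqif_eq sub1; rewrite eL1 -e1 eqxx => /esym/eqP <-.
  exact: capvSl.
have eq0 : (L :&: W0 <= L')%VS.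
  apply/subvP => m /memv_capP [mL /W0P mW0].
  case: (eqVneq m 0) => [->|m0]; first exact: mem0v.
  have [sP _] := shift_mem mL m0; rewrite -(Pf_id mW0); apply: sP.
  by rewrite Pf_id.
have LL' : (L <= L')%VS by apply: subv_trans Lsp _; rewrite subv_add eq0 eq1.
by apply/eqP; rewrite eq_sym eqEdim LL' dim_le.
Qed.

Lemma pot_lt : L' != L -> (pot L' < pot L)%N.
Proof.
move=> neq; apply: mset_lt; first exact: leqnn.
  by move=> x xB; have [a aB h] := F1 xB; exists a.
by apply/eqP => e; move: neq; rewrite F2 ?eqxx.
Qed.

End Step.

End Basics.

Theorem theorem3p9 (F : fieldType) (n k : nat)
  (char2 : (2%:R : F) != 0)
  (L : {vspace extalg F n}) (HL : (L <= wedgek F n k)%VS)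
  (I : {set 'I_n}) :
  ~ exists Ls : nat -> {vspace extalg F n},
      Ls 0%N = L /\
      forall s : nat, exists i j : 'I_n,
        [/\ i \in I, j \in I, (i < j)%N,
            is_slow_shift_space j i (Ls s) (Ls s.+1) & Ls s.+1 != Ls s].
Proof.
move=> [Ls [H0 Hs]].
have dec : forall s, (pot (Ls s.+1) < pot (Ls s))%N.
  by move=> s; have [i [j [_ _ hij hS hne]]] := Hs s; exact: (pot_lt hij hS hne).
have : forall s, (pot (Ls s) + s <= pot (Ls 0))%N.
  elim=> [|s IH]; first by rewrite addn0.
  by apply: leq_trans IH; rewrite addnS -addSn leq_add2r dec.
by move=> /(_ (pot (Ls 0)).+1); rewrite addnS ltnNge leq_addl.
Qed.
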